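(* Let $h\in\mathbb N$ and $u,v\in\mathfrak S_n$ with $u<v$, and let $F$ be an $h$-flipclass of paths from $u$ to $v$. Suppose that for all $i\in[h-1]$ and all vertices $(a,i-1),(b,i+1)$ of $TS_F$, the interval $[(a,i-1),(b,i+1)]$ in the poset induced by $TS_F$, if nonempty, is a diamond (i.e. contains exactly two elements besides its endpoints). For $i\in[h-1]$ define $\bar f_i$ on the set $P^{TS_F}_h((u,0),(v,h))$ of paths of length $h$ from $(u,0)$ to $(v,h)$ in $TS_F$ by sending $((a_0,0),\dots,(a_h,h))$ to the path obtained by replacing $(a_i,i)$ with the other middle element of the diamond $[(a_{i-1},i-1),(a_{i+1},i+1)]$. Then $\bar f_i$ is well defined and the map $i_{TS_F}$ is equivariant: $i_{TS_F}(f_i(\Gamma))=\bar f_i(i_{TS_F}(\Gamma))$ for all $\Gamma\in F$ and $i\in[h-1]$.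
   Context: $\mathfrak S_n$ is the symmetric group on $[n]$, $T$ its transpositions, $\ell$ the length w.r.t. simple transpositions. The Bruhat graph $B(\mathfrak S_n)$ has an edge $x\xrightarrow{t}y$ iff $yx^{-1}=t\in T$ and $\ell(x)<\ell(y)$; Bruhat order: $x\le y$ iff there is a directed path from $x$ to $y$. $P_h(u,v)$ is the set of paths $u=x_0\to\cdots\to x_h=v$ of length $h$. Between two fixed vertices there are $0$ or $2$ paths of length $2$, each the flip of the other; the $i$-th flip operator $f_i$ on $P_h(u,v)$ replaces $x_{i-1}\to x_i\to x_{i+1}$ by its flip; orbits of $\langle f_1,\dots,f_{h-1}\rangle$ on $P_h(u,v)$ are the $h$-flipclasses of paths from $u$ to $v$. The time-support graph $TS_F$ has vertices $(a,i)$ ($0\le i\le h$) such that some path $(x_0,\dots,x_h)\in F$ has $x_i=a$, and edges $(a,i)\xrightarrow{t}(b,i+1)$ whenever some path of $F$ contains $x_i=a\xrightarrow{t}b=x_{i+1}$; it is acyclic and induces a partial order on its vertices (reachability). The map $i_{TS_F}:F\to P^{TS_F}_h((u,0),(v,h))$ sends $(x_0,\dots,x_h)$ to $((x_0,0),\dots,(x_h,h))$. *)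

(* Defs.v *)
From mathcomp Require Import all_boot all_order all_fingroup.
Set Implicit Arguments. Unset Strict Implicit. Unset Printing Implicit Defensive.

Local Open Scope group_scope.

Section Bruhat.
Variable n : nat.

(* Coxeter length = number of inversions *)
Definition ell (s : 'S_n) : nat :=
  #|[set p : 'I_n * 'I_n | (p.1 < p.2)%N && (s p.2 < s p.1)%N]|.

Definition is_transp (p : 'S_n) : bool :=
  [exists i : 'I_n, exists j : 'I_n, (i != j) && (p == tperm i j)].

(* Bruhat graph edge x -> y : y x^{-1} in T (composition right-to-left,
   i.e. the mathcomp product x^-1 * y) and ell x < ell y *)
Definition bedge (x y : 'S_n) : bool := is_transp (x^-1 * y) && (ell x < ell y)%N.

Definition bruhat_lt (u v : 'S_n) : bool := (u != v) && connect bedge u v.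

Variable h : nat.

Definition pt (G : (h.+1).-tuple 'S_n) (i : nat) : 'S_n := nth 1 G i.

Definition is_bpath (u v : 'S_n) (G : (h.+1).-tuple 'S_n) : bool :=
  [&& pt G 0 == u, pt G h == v &
      [forall i : 'I_h, bedge (pt G i) (pt G i.+1)]].

Definition Pbr (u v : 'S_n) : {set (h.+1).-tuple 'S_n} := [set G | is_bpath u v G].

(* the i-th flip: replace x_i by the middle vertex of the other length-2 path
   from x_{i-1} to x_{i+1} (there are 0 or 2 such paths) *)
Definition flip (i : nat) (G : (h.+1).-tuple 'S_n) : (h.+1).-tuple 'S_n :=
  match [pick z | [&& z != pt G i, bedge (pt G i.-1) z & bedge z (pt G i.+1)]] with
  | Some z => [tuple if val j == i then z else tnth G j | j < h.+1]
  | None => G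
  end.

Definition flip_step (A B : (h.+1).-tuple 'S_n) : bool :=
  [exists i : 'I_h, (0 < val i)%N && (B == flip i A)].

(* the orbit of G0 under <f_1, ..., f_{h-1}> (the f_i are involutions, so the
   group orbit is the set reachable by finite words in the f_i) *)
Definition flipclass_of (G0 : (h.+1).-tuple 'S_n) : {set (h.+1).-tuple 'S_n} :=
  [set G | connect flip_step G0 G].

Definition is_flipclass (u v : 'S_n) (F : {set (h.+1).-tuple 'S_n}) : Prop :=
  exists2 G0, G0 \in Pbr u v & F = flipclass_of G0.

Definition TSV := ('S_n * 'I_h.+1)%type.

Definition ts_vertex (F : {set (h.+1).-tuple 'S_n}) (x : TSV) : bool :=
  [exists G in F, tnth G x.2 == x.1].

Definition ts_edge (F : {set (h.+1).-tuple 'S_n}) (x y : TSV) : bool :=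
  [exists G in F, [&& val y.2 == (val x.2).+1, tnth G x.2 == x.1 & tnth G y.2 == y.1]].

Definition ts_le (F : {set (h.+1).-tuple 'S_n}) (x y : TSV) : bool :=
  connect (ts_edge F) x y.

Definition ts_interval (F : {set (h.+1).-tuple 'S_n}) (x y : TSV) : {set TSV} :=
  [set w | [&& ts_vertex F w, ts_le F x w & ts_le F w y]].

Definition is_diamond (F : {set (h.+1).-tuple 'S_n}) (x y : TSV) : bool :=
  #|ts_interval F x y :\ x :\ y| == 2.

Definition tpt (P : (h.+1).-tuple TSV) (i : nat) : TSV := nth (1, ord0) P i.

Definition is_tspath (F : {set (h.+1).-tuple 'S_n}) (u v : 'S_n)
    (P : (h.+1).-tuple TSV) : bool :=
  [&& tpt P 0 == (u, ord0), tpt P h == (v, ord_max) &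
      [forall i : 'I_h, ts_edge F (tpt P i) (tpt P i.+1)]].

Definition TSpaths (F : {set (h.+1).-tuple 'S_n}) (u v : 'S_n) :
  {set (h.+1).-tuple TSV} := [set P | is_tspath F u v P].

Definition ts_mid (F : {set (h.+1).-tuple 'S_n}) (x y : TSV) : {set TSV} :=
  ts_interval F x y :\ x :\ y.

Definition barflip (F : {set (h.+1).-tuple 'S_n}) (i : nat)
    (P : (h.+1).-tuple TSV) : (h.+1).-tuple TSV :=
  match [pick c in ts_mid F (tpt P i.-1) (tpt P i.+1) :\ tpt P i] with
  | Some c => [tuple if val j == i then c else tnth P j | j < h.+1]
  | None => P
  end.

Definition iTS (G : (h.+1).-tuple 'S_n) : (h.+1).-tuple TSV :=
  [tuple (tnth G j, j) | j < h.+1].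

End Bruhat.

(* Main.v *)
Require Import Defs.
From mathcomp Require Import all_boot all_order all_fingroup.
From mathcomp Require Import zify.
Set Implicit Arguments. Unset Strict Implicit. Unset Printing Implicit Defensive.

Section H.
Variables n h : nat.
Implicit Types (G : (h.+1).-tuple 'S_n) (P : (h.+1).-tuple (TSV n h)) (F : {set (h.+1).-tuple 'S_n}).

Lemma nth_repl (T : Type) (d : T) (G : (h.+1).-tuple T) (i : nat) z k : k < h.+1 ->
  nth d [tuple if val j == i then z else tnth G j | j < h.+1] k = if k == i then z else nth d G k.
Proof. move=> hk; by rewrite -(tnth_nth d _ (Ordinal hk)) tnth_mktuple /= (tnth_nth d). Qed.

Lemma ptE G k (hk : k < h.+1) : pt G k = tnth G (Ordinal hk).
Proof. by rewrite /pt (tnth_nth 1%g). Qed.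

Lemma tnth_pt G (j : 'I_h.+1) : tnth G j = pt G j.
Proof. by rewrite /pt (tnth_nth 1%g). Qed.

Lemma ord_inord (t : 'I_h.+1) k : val t = k -> t = inord k.
Proof. by move=> <-; rewrite inord_val. Qed.

Lemma tpt_iTS G k : k < h.+1 -> tpt (iTS G) k = (pt G k, inord k).
Proof.
move=> hk; rewrite /tpt -(tnth_nth _ _ (Ordinal hk)) tnth_mktuple tnth_pt.
by congr pair; apply: ord_inord.
Qed.

Lemma ts_edge_time F x y : ts_edge F x y -> val y.2 = (val x.2).+1.
Proof. by case/existsP=> G /andP [_ /and3P [/eqP -> _ _]]. Qed.

Lemma ts_path_time F x p : path (ts_edge F) x p -> val (last x p).2 = val x.2 + size p.
Proof.
elim: p x => [|y p IH] x /=; first by rewrite addn0.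
case/andP=> /ts_edge_time e /IH ->; by rewrite e addnS addSn.
Qed.

Lemma ts_le_time F x y : ts_le F x y -> exists k, [/\ val y.2 = val x.2 + k,
   (k = 0 -> x = y) & (k = 1 -> ts_edge F x y)].
Proof.
case/connectP=> p pp ->; exists (size p); split.
- exact: (ts_path_time pp).
- by case: p pp => [|z q].
- by case: p pp => [|z [|]] //= /andP [].
Qed.

Lemma mid_edges F x y c : val y.2 = (val x.2).+2 -> c \in ts_mid F x y ->
  [/\ ts_edge F x c, ts_edge F c y & val c.2 = (val x.2).+1].
Proof.
move=> hxy /setD1P [cy /setD1P [cx]]; rewrite inE => /and3P [_ l1 l2].
case: (ts_le_time l1) => k1 [t1 z1 o1]; case: (ts_le_time l2) => k2 [t2 z2 o2].
have k1n0 : k1 <> 0 by move=> /z1 E; rewrite E eqxx in cx.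
have k2n0 : k2 <> 0 by move=> /z2 E; rewrite E eqxx in cy.
have e1 : k1 = 1 by move: hxy; rewrite t2 t1; move: k1n0 k2n0; clear; set a := val x.2; move=> *; lia.
have e2 : k2 = 1 by move: hxy; rewrite t2 t1; move: k1n0 k2n0; clear; set a := val x.2; move=> *; lia.
by split; [apply: o1 | apply: o2 | rewrite t1 e1 addn1].
Qed.

Lemma repl_path (T : Type) (d : T) (e : T -> T -> bool) (G : (h.+1).-tuple T) i z :
  0 < i < h -> (forall j : 'I_h, e (nth d G j) (nth d G j.+1)) ->
  e (nth d G i.-1) z -> e z (nth d G i.+1) ->
  forall j : 'I_h, e (nth d [tuple if val j == i then z else tnth G j | j < h.+1] j)
                     (nth d [tuple if val j == i then z else tnth G j | j < h.+1] j.+1).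
Proof.
move=> /andP [i0 ih] pe e1 e2 j.
rewrite !nth_repl ?ltnS ?(ltnW (ltn_ord j)) ?ltn_ord //.
case: (eqVneq (val j) i) => [ji|jni].
  have -> : (j.+1 == i) = false by rewrite -ji gtn_eqF.
  by move: e2; rewrite -ji.
case: (eqVneq j.+1 i) => [j1|j1]; first by rewrite -j1 /= in e1.
exact: pe.
Qed.

Lemma flip_bpath u v (i : nat) G : 0 < i < h -> G \in Pbr h u v -> flip i G \in Pbr h u v.
Proof.
move=> hi; have /andP [i0 ih] := hi.
rewrite !inE /is_bpath => /and3P [p0 ph /forallP pe].
rewrite /flip; case: pickP => [z /and3P [zn e1 e2]|_]; last by rewrite p0 ph; apply/forallP.
rewrite /pt !nth_repl // (ltn_eqF i0) (gtn_eqF ih).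
rewrite /pt in p0 ph; rewrite p0 ph /=; apply/forallP.
by apply: repl_path.
Qed.

Lemma F_bpath u v G0 G : G0 \in Pbr h u v -> G \in flipclass_of G0 -> G \in Pbr h u v.
Proof.
move=> hG0; rewrite inE => /connectP [p pp ->].
elim: p G0 pp hG0 => //= G1 p IH G0 /andP [st pp] hG0; apply: IH pp _.
case/existsP: st => i /andP [i0 /eqP ->]; apply: flip_bpath => //.
by rewrite i0 ltn_ord.
Qed.

Lemma edge_pts F u v x y : (forall G, G \in F -> G \in Pbr h u v) ->
  ts_edge F x y -> forall hx : val x.2 < h, bedge x.1 y.1.
Proof.
move=> FP /existsP [G /andP [GF /and3P [/eqP ty /eqP gx /eqP gy]]] hx.
have := FP G GF; rewrite inE => /and3P [_ _ /forallP pe].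
by have := pe (Ordinal hx); rewrite -gx -gy !tnth_pt /= ty.
Qed.

Lemma edge_v1 F x y : ts_edge F x y -> ts_vertex F x.
Proof. by case/existsP=> G /andP [GF /and3P [_ gx _]]; apply/existsP; exists G; rewrite GF. Qed.
Lemma edge_v2 F x y : ts_edge F x y -> ts_vertex F y.
Proof. by case/existsP=> G /andP [GF /and3P [_ _ gy]]; apply/existsP; exists G; rewrite GF. Qed.



Lemma wd F u v (Hd : forall (i : 'I_h) (a b : 'S_n), (0 < val i)%N ->
     ts_vertex F (a, inord i.-1) -> ts_vertex F (b, inord i.+1) ->
     ts_interval F (a, inord i.-1) (b, inord i.+1) != set0 ->
     is_diamond F (a, inord i.-1) (b, inord i.+1)) (i : 'I_h) P :
  0 < val i -> P \in TSpaths F u v ->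
     [/\ tpt P i \in ts_mid F (tpt P i.-1) (tpt P i.+1),
         #|ts_mid F (tpt P i.-1) (tpt P i.+1) :\ tpt P i| = 1%N &
         barflip F i P \in TSpaths F u v].
Proof.
move=> i0; rewrite inE /is_tspath => /and3P [/eqP p0 /eqP ph /forallP pe].
have tm : forall k, k < h.+1 -> val (tpt P k).2 = k.
  elim=> [|k IH] hk; first by rewrite p0.
  have hk' : k < h by [].
  by rewrite (ts_edge_time (pe (Ordinal hk'))) IH // ltnW.
have hi1 : i.-1 < h by rewrite (leq_ltn_trans (leq_pred _)).
have e1 : ts_edge F (tpt P i.-1) (tpt P i) by have := pe (Ordinal hi1); rewrite /= prednK.
have e2 := pe i.
have tx : val (tpt P i.-1).2 = i.-1 by apply: tm; apply: ltnW.
have ty : val (tpt P i).2 = i by rewrite tm // ltnS ltnW.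
have tw : val (tpt P i.+1).2 = i.+1 by rewrite tm // ltnS.
set x := tpt P i.-1 in e1 tx *; set y := tpt P i in e1 e2 ty *; set w := tpt P i.+1 in e2 tw *.
have Ex : x = (x.1, inord i.-1) by rewrite -(ord_inord tx) -surjective_pairing.
have Ew : w = (w.1, inord i.+1) by rewrite -(ord_inord tw) -surjective_pairing.
have neq : forall a b : TSV n h, val a.2 <> val b.2 -> a != b.
  by move=> a b hab; apply/eqP => E; apply: hab; rewrite E.
have yw : y != w by apply: neq; rewrite ty tw; lia.
have yx : y != x by apply: neq; rewrite ty tx; apply/eqP; rewrite -{1}(prednK i0) eqn_leq ltnn.
have yin : y \in ts_mid F x w.
  rewrite !inE yw yx (edge_v2 e1) /=; apply/andP; split; exact: connect1.
have hd : is_diamond F x w.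
  rewrite {1}Ex {1}Ew; apply: Hd => //.
  - by rewrite -Ex; apply: edge_v1 e1.
  - by rewrite -Ew; apply: edge_v2 e2.
  - by rewrite -Ex -Ew; apply/set0Pn; exists y; move: yin => /setD1P [_ /setD1P [_ ->]].
have c1 : #|ts_mid F x w :\ y| = 1.
  by have := cardsD1 y (ts_mid F x w); rewrite yin /ts_mid (eqP hd) /= => /eqP; rewrite add1n eqSS => /eqP <-.
split => //.
rewrite /barflip; move/eqP: (c1) => /cards1P [c Ec].
have cin : c \in ts_mid F x w :\ y by rewrite Ec set11.
case: pickP => [c' |]; last by move/(_ c); rewrite cin.
move=> c'in; have -> : c' = c by move: c'in; rewrite Ec inE => /eqP.
have /setD1P [cy cmid] := cin.
have [ex ew tc] := mid_edges (etrans tw (etrans (congr1 S (esym (prednK i0))) (congr1 (fun k => k.+2) (esym tx)))) cmid.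
rewrite inE /is_tspath /tpt !nth_repl // (ltn_eqF i0) (gtn_eqF (ltn_ord i)) -/(tpt P 0) -/(tpt P h) p0 ph !eqxx /=.
apply/forallP; apply: repl_path => //; first by rewrite i0 ltn_ord.
Qed.

Lemma main u v G0 (G0P : G0 \in Pbr h u v) (Hd : forall (i : 'I_h) (a b : 'S_n), (0 < val i)%N ->
     ts_vertex (flipclass_of G0) (a, inord i.-1) -> ts_vertex (flipclass_of G0) (b, inord i.+1) ->
     ts_interval (flipclass_of G0) (a, inord i.-1) (b, inord i.+1) != set0 ->
     is_diamond (flipclass_of G0) (a, inord i.-1) (b, inord i.+1)) :
  (forall (i : 'I_h) (G : (h.+1).-tuple 'S_n), (0 < val i)%N -> G \in flipclass_of G0 ->
     iTS (flip i G) = barflip (flipclass_of G0) i (iTS G)).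
Proof.
set F := flipclass_of G0.
have FP : forall G, G \in F -> G \in Pbr h u v by move=> G; apply: F_bpath.
have iTSP : forall G, G \in F -> iTS G \in TSpaths F u v.
  move=> G1 G1F; have := FP _ G1F; rewrite !inE /is_bpath /is_tspath => /and3P [/eqP q0 /eqP qh /forallP qe].
  have i00 : inord 0 = ord0 :> 'I_h.+1 by apply/val_inj; rewrite /= inordK.
  have ihh : inord h = ord_max :> 'I_h.+1 by apply/val_inj; rewrite /= inordK.
  rewrite !tpt_iTS // q0 qh i00 ihh !eqxx /=.
  apply/forallP => j; rewrite !tpt_iTS ?ltnS ?ltn_ord ?(ltnW (ltn_ord j)) //.
  apply/existsP; exists G1; rewrite G1F /= !tnth_pt !inordK ?ltnS ?ltn_ord ?(ltnW (ltn_ord j)) // !eqxx.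
  done.
move=> i G i0 GF.
have [_ c1 _] := wd Hd i0 (iTSP G GF).
have hi : 0 < i < h by rewrite i0 ltn_ord.
have ih1 : i < h.+1 by rewrite ltnS ltnW.
have ihm : i.-1 < h.+1 by apply: leq_ltn_trans (leq_pred _) ih1.
have ihp : i.+1 < h.+1 by rewrite ltnS.
have GF' : flip i G \in F.
  move: GF; rewrite !inE => GF; apply: (connect_trans GF); apply: connect1.
  by apply/existsP; exists i; rewrite i0 /=.
set P := iTS G in c1 *.
move/eqP: (c1) => /cards1P [c Ec].
move: GF'; rewrite /flip; case: pickP => [z /and3P [zn e1 e2]|none] GF'.
  set G' := [tuple _ | _ < _] in GF' *.
  have pG' : forall k, k < h.+1 -> k != i -> pt G' k = pt G k.
    by move=> k hk ki; rewrite /pt nth_repl // (negbTE ki).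
  have pGi : pt G' i = z by rewrite /pt nth_repl ?eqxx.
  have [yin' _ _] := wd Hd i0 (iTSP _ GF').
  have E1 : tpt (iTS G') i.-1 = tpt P i.-1.
    rewrite !tpt_iTS // pG' //; apply/eqP; lia.
  have E2 : tpt (iTS G') i.+1 = tpt P i.+1.
    rewrite !tpt_iTS // pG' //; apply/eqP; lia.
  rewrite E1 E2 in yin'.
  have yin2 : tpt (iTS G') i \in ts_mid F (tpt P i.-1) (tpt P i.+1) :\ tpt P i.
    rewrite in_setD1 yin' andbT !tpt_iTS // pGi; apply: contra zn.
    by move/eqP=> [->].
  rewrite /barflip; case: pickP => [c' c'in|none]; last by have := none (tpt (iTS G') i); rewrite yin2.
  have Ec' : c' = tpt (iTS G') i by move: c'in yin2; rewrite Ec !inE => /eqP -> /eqP.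
  rewrite Ec'; apply: eq_from_tnth => j; rewrite [RHS]tnth_mktuple.
  case: eqP => [ji|jni]; first by rewrite /tpt -ji -tnth_nth.
  rewrite /P /iTS !tnth_mktuple !tnth_pt; by case: eqP.
exfalso.
have cin : c \in ts_mid F (tpt P i.-1) (tpt P i.+1) :\ tpt P i by rewrite Ec set11.
case/setD1P: cin => cy cmid.
have tx : tpt P i.-1 = (pt G i.-1, inord i.-1) by rewrite tpt_iTS.
have tw : tpt P i.+1 = (pt G i.+1, inord i.+1) by rewrite tpt_iTS.
have ty : tpt P i = (pt G i, inord i) by rewrite tpt_iTS.
rewrite tx tw in cmid.
have tt : val (inord i.+1 : 'I_h.+1) = (val (inord i.-1 : 'I_h.+1)).+2 by rewrite /= !inordK // prednK.
have [ex ew tc] := mid_edges (x := (pt G i.-1, inord i.-1)) (y := (pt G i.+1, inord i.+1)) tt cmid.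
have b1 : bedge (pt G i.-1) c.1 by apply: (edge_pts FP ex); rewrite /= inordK //; lia.
have tc' : val c.2 = i by rewrite tc /= inordK // prednK.
have b2 : bedge c.1 (pt G i.+1) by apply: (edge_pts FP ew); rewrite tc'.
have c2 : c.2 = inord i by apply: ord_inord.
have cn : c.1 != pt G i.
  apply: contra cy; rewrite ty => /eqP ce; apply/eqP.
  by rewrite (surjective_pairing c) ce c2.
by have := none c.1; rewrite b1 b2 cn.
Qed.
End H.

Theorem lemma5p6 (n h : nat) (u v : 'S_n) (F : {set (h.+1).-tuple 'S_n}) :
  bruhat_lt u v ->
  is_flipclass u v F ->
  (forall (i : 'I_h) (a b : 'S_n), (0 < val i)%N ->
     ts_vertex F (a, inord i.-1) -> ts_vertex F (b, inord i.+1) ->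
     ts_interval F (a, inord i.-1) (b, inord i.+1) != set0 ->
     is_diamond F (a, inord i.-1) (b, inord i.+1)) ->
  (* \bar f_i is well defined *)
  (forall (i : 'I_h) (P : (h.+1).-tuple (TSV n h)), (0 < val i)%N ->
     P \in TSpaths F u v ->
     [/\ tpt P i \in ts_mid F (tpt P i.-1) (tpt P i.+1),
         #|ts_mid F (tpt P i.-1) (tpt P i.+1) :\ tpt P i| = 1%N &
         barflip F i P \in TSpaths F u v])
  /\
  (* i_{TS_F} is equivariant *)
  (forall (i : 'I_h) (G : (h.+1).-tuple 'S_n), (0 < val i)%N -> G \in F ->
     iTS (flip i G) = barflip F i (iTS G)).
Proof.
move=> _ [G0 G0P ->] Hd; split.
  by move=> i P i0 PP; apply: wd.
exact: (main G0P Hd).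
Qed.
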